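(* Fix weights $w_i\ge0$ with $\sum_{i\in N}w_i=1$. There exists a unique PAF $\psi:\mathcal P^N\to\mathcal P$ that is Level-SP and satisfies weighted proportionality with respect to $\mathbf w$. It is the PAF whose associated CAF is $$\Psi(P_1,\dots,P_n)(a)=\mu_{\mathbf w}(P_1(a),\dots,P_n(a))\quad\text{for all }a\in\Lambda,\ (P_1,\dots,P_n)\in\mathcal C^N,$$ where $\mu_{\mathbf w}(\mathbf r)=\sup\{y\in[0,1]:\sum_{i:\,r_i\ge y}w_i\ge y\}$; in particular this PAF is certainty preserving.
   Context: Let $N=\{1,\dots,n\}$, $\Lambda\subseteq\mathbb R$ a nonempty Borel set, $\mathcal P$ the Borel probability measures on $\Lambda$, $\mathcal C$ the CDFs on $\Lambda$, $\pi(p)(a)=p(\{x\in\Lambda:x\le a\})$. A PAF is a map $\psi:\mathcal P^N\to\mathcal P$ with associated CAF $\Psi$ given by $\Psi(\pi(p_1),\dots,\pi(p_n))=\pi(\psi(p_1,\dots,p_n))$; $P_i=\pi(p_i)$. $\mathbf z_{-i}(z_i')$ is $\mathbf z$ with $i$-th coordinate replaced by $z_i'$. $\psi$ is Level-SP if for every $i$, $\mathbf P$, $P_i'$, $a$: $P_i(a)<\Psi(\mathbf P)(a)\Rightarrow\Psi(\mathbf P)(a)\le\Psi(\mathbf P_{-i}(P_i'))(a)$ and $P_i(a)>\Psi(\mathbf P)(a)\Rightarrow\Psi(\mathbf P)(a)\ge\Psi(\mathbf P_{-i}(P_i'))(a)$. $\delta_a$ denotes the Dirac mass at $a$. $\psi$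 satisfies weighted proportionality (w.r.t. $\mathbf w$) if $\psi(\delta_{a_1},\dots,\delta_{a_n})=\sum_{i\in N}w_i\delta_{a_i}$ for all $(a_1,\dots,a_n)\in\Lambda^N$. $\psi$ is certainty preserving if for every profile $\mathbf p$ and Borel $A\subseteq\Lambda$, $p_i(A)=1$ for all $i$ implies $\psi(\mathbf p)(A)=1$. *)

(* Defs.v *)
From HB Require Import structures.
From mathcomp Require Import all_boot all_order all_algebra.
From mathcomp Require Import all_classical all_reals all_analysis.
Set Implicit Arguments. Unset Strict Implicit. Unset Printing Implicit Defensive.
Import Order.TTheory GRing.Theory Num.Theory.
Local Open Scope classical_set_scope.
Local Open Scope ring_scope.

(* Borel probability measures on Lambda (a Borel subset of R), represented as
   Borel probability measures on R that are concentrated on Lambda. *)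
Definition PL (R : realType) (Lam : set R) :=
  {p : probability R R | p Lam = 1%E}.

Definition cdfL (R : realType) (Lam : set R) (p : PL Lam) (a : R) : R :=
  fine (sval p [set x | Lam x /\ x <= a]).

Definition PAF (R : realType) (Lam : set R) (n : nat) :=
  ('I_n -> PL Lam) -> PL Lam.

Definition upd (T : Type) (n : nat) (p : 'I_n -> T) (i : 'I_n) (q : T) : 'I_n -> T :=
  fun j => if j == i then q else p j.

Definition LevelSP (R : realType) (Lam : set R) (n : nat) (psi : PAF Lam n) : Prop :=
  forall (i : 'I_n) (p : 'I_n -> PL Lam) (q : PL Lam) (a : R), Lam a ->
    (cdfL (p i) a < cdfL (psi p) a -> cdfL (psi p) a <= cdfL (psi (upd p i q)) a) /\
    (cdfL (p i) a > cdfL (psi p) a -> cdfL (psi p) a >= cdfL (psi (upd p i q)) a).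

Definition WeightedProp (R : realType) (Lam : set R) (n : nat) (w : 'I_n -> R)
    (psi : PAF Lam n) : Prop :=
  forall (a : 'I_n -> R) (p : 'I_n -> PL Lam),
    (forall i, Lam (a i)) ->
    (forall i A, measurable A -> sval (p i) A = \d_(a i) A) ->
    forall A, measurable A -> sval (psi p) A = (\sum_(i < n) (w i)%:E * \d_(a i) A)%E.

Definition CertaintyPreserving (R : realType) (Lam : set R) (n : nat)
    (psi : PAF Lam n) : Prop :=
  forall (p : 'I_n -> PL Lam) (A : set R), measurable A -> A `<=` Lam ->
    (forall i, sval (p i) A = 1%E) -> sval (psi p) A = 1%E.

Definition mu_w (R : realType) (n : nat) (w : 'I_n -> R) (r : 'I_n -> R) : R :=
  sup [set y : R | 0 <= y <= 1 /\ y <= \sum_(i < n | y <= r i) w i].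

(* Main.v *)
Require Import Defs.
From HB Require Import structures.
From mathcomp Require Import all_boot all_order all_algebra.
From mathcomp Require Import all_classical all_reals all_analysis.
From mathcomp Require Import lra.
Import Order.TTheory GRing.Theory Num.Theory.
Import numFieldTopology.Exports numFieldNormedType.Exports.
Local Open Scope classical_set_scope.
Local Open Scope ring_scope.
Set Implicit Arguments. Unset Strict Implicit. Unset Printing Implicit Defensive.

Definition idR (R : realType) : R -> R := fun x => x.
HB.instance Definition _ (R : realType) :=
  @isMeasurableFun.Build _ _ R R (@idR R) (@measurable_id _ _ setT).

Section CdfUnique.
Variable R : realType.
Local Open Scope ereal_scope.

Lemma measure_oc (m : {measure set R -> \bar R}) (a b : R) :
  (a <= b)%R -> m `]-oo, b]%classic < +oo ->
  m `]a, b]%classic = m `]-oo, b]%classic - m `]-oo, a]%classic.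
Proof.
move=> ab mb.
have -> : `]a, b]%classic = `]-oo, b]%classic `\` `]-oo, a]%classic.
  by rewrite -[RHS]setCK setCD setCitvl setUC -[LHS]setCK setCitv.
rewrite measureD ?setIidr//; exact: subset_itvl.
Qed.

Lemma cdf_unique (m1 m2 : {measure set R -> \bar R}) :
  (forall x, m1 `]-oo, x]%classic = m2 `]-oo, x]%classic) -> (forall x, m1 `]-oo, x]%classic < +oo) ->
  forall A, measurable A -> m1 A = m2 A.
Proof.
move=> h1 h2 A mA.
have h2' x : m2 `]-oo, x]%classic < +oo by rewrite -h1.
apply: (@measure_unique _ R R (@ocitv R) (fun k : nat => `](- k%:R)%R, (k%:R)%R]%classic)) => //.
- exact: (@ocitvI R).
- move=> k; exact: is_ocitv.
- rewrite -subTset => x _.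
  exists (Num.Def.trunc `|x| ).+1 => //=; rewrite in_itv /=.
  have h : (`|x| < (Num.Def.trunc `|x|).+1%:R)%R by rewrite truncnS_gt.
  apply/andP; split.
    by rewrite ltrNl (le_lt_trans _ h)// ler_normr lexx orbT.
  by rewrite ltW// (le_lt_trans _ h)// ler_norm.
- move=> X /ocitvP [->|[[a b] /= ab ->]]; first by rewrite !measure0.
  rewrite (measure_oc (m:=m1) (ltW ab) (h2 b)) (measure_oc (m:=m2) (ltW ab) (h2' b)).
  by rewrite !h1.
- move=> k; rewrite (le_lt_trans _ (h2 (k%:R)%R))//; apply: le_measure; rewrite ?inE//.
  by apply: subset_itvr; rewrite bnd_simp.
Qed.
End CdfUnique.

Section PLbasics.
Variable R : realType.
Variable Lam : set R.
Hypothesis hLam : measurable Lam.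
Local Open Scope ereal_scope.

Lemma PL_conc (p : PL Lam) A : measurable A -> sval p A = sval p (A `&` Lam).
Proof.
move=> mA; case: p => P /= PL1.
rewrite (measureDI P mA hLam) -[RHS]add0e; congr (_ + _).
apply/eqP; rewrite eq_le measure_ge0 andbT.
have <- : P (~` Lam) = 0 by rewrite probability_setC // PL1 subee.
apply: le_measure; rewrite ?inE; [exact: measurableD|exact: measurableC|].
by move=> x [].
Qed.

Definition Fc (p : PL Lam) (x : R) : R := fine (sval p `]-oo, x]%classic).

Lemma FcE (p : PL Lam) x : sval p `]-oo, x]%classic = (Fc p x)%:E.
Proof. by rewrite /Fc fineK// fin_num_measure. Qed.

Lemma cdfLE (p : PL Lam) a : cdfL p a = Fc p a.
Proof.
rewrite /cdfL /Fc; congr fine.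
rewrite [RHS]PL_conc//; congr (sval p _).
by apply/seteqP; split => x /=; rewrite in_itv /=; case.
Qed.

Lemma Fc_ge0 (p : PL Lam) x : (0 <= Fc p x)%R.
Proof. by rewrite /Fc fine_ge0. Qed.

Lemma Fc_le1 (p : PL Lam) x : (Fc p x <= 1)%R.
Proof. by rewrite -lee_fin -FcE probability_le1. Qed.

Lemma Fc_nd (p : PL Lam) : nondecreasing (Fc p).
Proof.
move=> x y xy; rewrite -lee_fin -!FcE le_measure ?inE//.
by apply: subset_itvl; rewrite bnd_simp.
Qed.

Lemma Fc_cdf (p : PL Lam) x : Fc p x = fine (cdf (@idR R : {RV sval p >-> R}) x).
Proof. by []. Qed.

Lemma Fc_rc (p : PL Lam) : right_continuous (Fc p).
Proof.
move=> a; rewrite (_ : Fc p = fine \o cdf (@idR R : {RV sval p >-> R})); last first.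
  by apply/funext => x.
apply: fine_cvg.
by rewrite fineK ?fin_num_measure//; exact: cdf_right_continuous.
Qed.

Local Close Scope ereal_scope.
Lemma Fc_Ny0 (p : PL Lam) : Fc p @ -oo --> (0:R).
Proof.
rewrite (_ : Fc p = fine \o cdf (@idR R : {RV sval p >-> R})); last first.
  by apply/funext => x.
exact/fine_cvg/cvg_cdfNy0.
Qed.

Lemma Fc_y1 (p : PL Lam) : Fc p @ +oo --> (1:R).
Proof.
rewrite (_ : Fc p = fine \o cdf (@idR R : {RV sval p >-> R})); last first.
  by apply/funext => x.
exact/fine_cvg/cvg_cdfy1.
Qed.

Local Open Scope ereal_scope.
Lemma dirac_Lam b : Lam b -> (\d_b : probability R R) Lam = 1.
Proof. by move=> hb; rewrite [LHS]diracE mem_set. Qed.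

Definition dPL (b : R) (hb : Lam b) : PL Lam :=
  exist _ (\d_b : probability R R) (dirac_Lam hb).

Lemma cdfL_dPL b (hb : Lam b) a :
  cdfL (dPL hb) a = if (b <= a)%R then 1%R else 0%R.
Proof.
rewrite /cdfL /= indicE; case: ifPn => ba.
  by rewrite mem_set.
by rewrite memNset //= => -[_]; apply/negP.
Qed.

End PLbasics.

Section Mu.
Variable R : realType.
Variable n : nat.
Variable w : 'I_n -> R.
Hypothesis hw0 : forall i, 0 <= w i.

Definition Mset (r : 'I_n -> R) : set R :=
  [set y : R | 0 <= y <= 1 /\ y <= \sum_(i < n | y <= r i) w i].

Lemma mu_wE r : mu_w w r = sup (Mset r). Proof. by []. Qed.

Lemma Ssub (P Q : pred 'I_n) : (forall i, P i -> Q i) ->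
  \sum_(i < n | P i) w i <= \sum_(i < n | Q i) w i.
Proof.
move=> PQ; rewrite [X in X <= _]big_mkcond [X in _ <= X]big_mkcond /=.
apply: ler_sum => i _; case: ifPn => Pi; first by rewrite PQ.
by case: ifPn.
Qed.

Lemma S_ge0 (P : pred 'I_n) : 0 <= \sum_(i < n | P i) w i.
Proof. exact: sumr_ge0. Qed.

Lemma M0 r : Mset r 0.
Proof. by split; [rewrite lexx ler01 | exact: S_ge0]. Qed.

Lemma Mne r : Mset r !=set0.
Proof. by exists 0; exact: M0. Qed.

Lemma hasM r : has_sup (Mset r).
Proof. split; first exact: Mne. exists 1 => y [/andP [_ h] _]; exact: h. Qed.

Lemma mu_ub r y : Mset r y -> y <= mu_w w r.
Proof. by move=> My; apply: sup_upper_bound => //; exact: hasM. Qed.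

Lemma mu_le r z : (forall y, Mset r y -> y <= z) -> mu_w w r <= z.
Proof. by move=> h; apply: ge_sup; [exact: Mne | exact: h]. Qed.

Lemma mu_ge0 r : 0 <= mu_w w r.
Proof. exact/mu_ub/M0. Qed.

Lemma mu_le1 r : mu_w w r <= 1.
Proof. by apply: mu_le => y [/andP[]]. Qed.

Lemma mu_adh r x : x < mu_w w r -> exists2 y, Mset r y & x < y.
Proof.
move=> xm; have h1 : 0 < mu_w w r - x by rewrite subr_gt0.
have [y My lty] := sup_adherent h1 (hasM r).
by exists y => //; move: lty; rewrite -/(mu_w w r) opprB addrC subrK.
Qed.

Lemma mu_mono r r' : (forall i, r i <= r' i) -> mu_w w r <= mu_w w r'.
Proof.
move=> rr; apply: mu_le => y [y01 yS]; apply: mu_ub; split => //.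
apply: (le_trans yS); apply: Ssub => i /= yi; exact: le_trans yi (rr i).
Qed.

Lemma mu_lip r r' c : 0 <= c -> (forall i, r' i <= r i + c) ->
  mu_w w r' <= mu_w w r + c.
Proof.
move=> c0 rr; apply: mu_le => y [/andP[y0 y1] yS].
rewrite -lerBlDr; have [yc|cy] := leP (y - c) 0.
  exact: le_trans yc (mu_ge0 r).
apply: mu_ub; split.
  by rewrite (ltW cy) /= (le_trans _ y1)// lerBlDr lerDl.
apply: (le_trans _ (le_trans yS _)); first by rewrite lerBlDr lerDl.
apply: Ssub => i /= yi; rewrite lerBlDr; exact: le_trans yi (rr i).
Qed.

Lemma mu_le_sum r : (forall i, 0 <= r i) -> mu_w w r <= \sum_(i < n) r i.
Proof.
move=> r0; apply: mu_le => y [/andP[y0 y1] yS].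
have [->|yp] := eqVneq y 0; first exact: sumr_ge0.
have [[i yi]|hn] := pselect (exists i, y <= r i); last first.
  have hn' : forall i, ~~ (y <= r i).
    by move=> i; apply/negP => yi; apply: hn; exists i.
  have : \sum_(i < n | y <= r i) w i = 0.
    by rewrite big_pred0 // => i; exact: negbTE (hn' i).
  move=> S0; move: yS; rewrite S0 => y0'.
  have y00 : y = 0 by apply/le_anti; rewrite y0' y0.
  by rewrite y00 eqxx in yp.
rewrite (le_trans yi)// (bigD1 i) //= lerDl; exact: sumr_ge0.
Qed.

Hypothesis hw1 : \sum_(i < n) w i = 1.

Lemma mu_one r : (forall i, 1 <= r i) -> mu_w w r = 1.
Proof.
move=> r1; apply/le_anti; rewrite mu_le1 /=; apply: mu_ub; split.
  by rewrite ler01 lexx.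
by rewrite (eq_bigl xpredT) ?hw1// => i; rewrite r1.
Qed.

Lemma mu_ge_sum r : (forall i, r i <= 1) ->
  1 - \sum_(i < n) (1 - r i) <= mu_w w r.
Proof.
move=> r1; rewrite lerBlDr.
have c0 : 0 <= \sum_(i < n) (1 - r i) by apply: sumr_ge0 => i _; rewrite subr_ge0.
have hpt : forall i, 1 <= r i + \sum_(i < n) (1 - r i).
  move=> i; rewrite -lerBlDl (bigD1 i) //= lerDl; apply: sumr_ge0 => j _.
  by rewrite subr_ge0.
have h := @mu_lip r (fun _ => 1) _ c0 hpt.
by rewrite mu_one in h.
Qed.

Lemma mu_binary (P : pred 'I_n) :
  mu_w w (fun i => if P i then 1 else 0) = \sum_(i < n | P i) w i.
Proof.
apply/le_anti/andP; split.
  apply: mu_le => y [/andP[y0 y1] yS].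
  have [->|yp] := eqVneq y 0; first exact: S_ge0.
  apply: (le_trans yS); apply: Ssub => i /=; case: ifPn => // _.
  move=> y0'; have y00 : y = 0 by apply/le_anti; rewrite y0' y0.
  by rewrite y00 eqxx in yp.
apply: mu_ub; split.
  by rewrite S_ge0 /= -hw1; apply: Ssub.
by apply: Ssub => i /= ->; rewrite -hw1; apply: Ssub.
Qed.

Lemma mu_sp_lt r i t : r i < mu_w w r -> mu_w w r <= mu_w w (upd r i t).
Proof.
move=> ri; rewrite leNgt; apply/negP => hlt.
have hx : Num.max (r i) (mu_w w (upd r i t)) < mu_w w r by rewrite gt_max ri hlt.
have [y [y01 yS] ly] := mu_adh hx.
move: ly; rewrite gt_max => /andP[riy my].
have : y <= mu_w w (upd r i t).
  apply: mu_ub; split => //; apply: (le_trans yS); apply: Ssub => j /= yj.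
  rewrite /upd; case: eqP => [eji|//].
  by move: riy; rewrite -eji ltNge yj.
by rewrite leNgt my.
Qed.

Lemma mu_sp_gt r i t : mu_w w r < r i -> mu_w w (upd r i t) <= mu_w w r.
Proof.
move=> ri; apply: mu_le => y [/andP[y0 y1] yS].
rewrite leNgt; apply/negP => my.
have [yri|riy] := leP y (r i).
  have : y <= mu_w w r.
    apply: mu_ub; split; first by rewrite y0 y1.
    apply: (le_trans yS); apply: Ssub => j /=; rewrite /upd.
    by case: eqP => [->//|].
  by rewrite leNgt my.
have : r i <= mu_w w r.
  apply: mu_ub; split.
    by rewrite (le_trans (mu_ge0 r) (ltW ri)) /= (le_trans (ltW riy) y1).
  apply: (le_trans (ltW riy)); apply: (le_trans yS); apply: Ssub => j /=; rewrite /upd.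
  case: eqP => [->//|_ yj]; exact: ltW (lt_le_trans riy yj).
by rewrite leNgt ri.
Qed.

End Mu.

Section PartA.
Variable R : realType.
Variable n : nat.
Variable Lam : set R.
Hypothesis hLam : measurable Lam.
Variable w : 'I_n -> R.
Hypothesis hw0 : forall i, 0 <= w i.
Hypothesis hw1 : \sum_(i < n) w i = 1.
Variable psi : PAF Lam n.
Hypothesis hSP : LevelSP psi.
Hypothesis hWP : WeightedProp w psi.

Lemma cdfL_ge0 (q : PL Lam) a : 0 <= cdfL q a.
Proof. by rewrite cdfLE //; exact: Fc_ge0. Qed.

Lemma cdfL_le1 (q : PL Lam) a : cdfL q a <= 1.
Proof. by rewrite cdfLE //; exact: Fc_le1. Qed.

Lemma upd_upd (T : Type) (q : 'I_n -> T) i t : upd (upd q i t) i (q i) = q.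
Proof. by apply/funext => j; rewrite /upd; case: eqP => // ->. Qed.

Lemma upd_i (T : Type) (q : 'I_n -> T) i t : upd q i t i = t.
Proof. by rewrite /upd eqxx. Qed.

Variable a : R.
Hypothesis ha : Lam a.

Let Phi (q : 'I_n -> PL Lam) := cdfL (psi q) a.

Lemma same_lt q i t : cdfL (q i) a < Phi q -> cdfL t a < Phi q ->
  Phi (upd q i t) = Phi q.
Proof.
move=> h1 h2; have e1 := (hSP i q t ha).1 h1.
apply/le_anti; rewrite e1 andbT.
have h3 : cdfL (upd q i t i) a < Phi (upd q i t) by rewrite upd_i (lt_le_trans h2).
by have := (hSP i (upd q i t) (q i) ha).1 h3; rewrite upd_upd.
Qed.

Lemma same_gt q i t : Phi q < cdfL (q i) a -> Phi q < cdfL t a ->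
  Phi (upd q i t) = Phi q.
Proof.
move=> h1 h2; have e1 := (hSP i q t ha).2 h1.
apply/le_anti; rewrite e1 /=.
have h3 : Phi (upd q i t) < cdfL (upd q i t i) a by rewrite upd_i (le_lt_trans e1).
by have := (hSP i (upd q i t) (q i) ha).2 h3; rewrite upd_upd.
Qed.

Lemma to_low q i t : cdfL t a = 0 -> Phi (upd q i t) <= Phi q.
Proof.
move=> t0; have [h|h] := ltP 0 (Phi (upd q i t)).
  have h3 : cdfL (upd q i t i) a < Phi (upd q i t) by rewrite upd_i t0.
  by have := (hSP i (upd q i t) (q i) ha).1 h3; rewrite upd_upd.
exact: le_trans h (cdfL_ge0 _ _).
Qed.

Lemma to_high q i t : cdfL t a = 1 -> Phi q <= Phi (upd q i t).
Proof.
move=> t1; have [h|h] := ltP (Phi (upd q i t)) 1.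
  have h3 : Phi (upd q i t) < cdfL (upd q i t i) a by rewrite upd_i t1.
  by have := (hSP i (upd q i t) (q i) ha).2 h3; rewrite upd_upd.
exact: le_trans (cdfL_le1 _ _) h.
Qed.

Lemma induct (p : 'I_n -> PL Lam) (target : 'I_n -> PL Lam) (Pr : R -> Prop) :
  Pr (Phi p) ->
  (forall k (hk : (k < n)%N),
     Pr (Phi (fun i => if (i < k)%N then target i else p i)) ->
     Pr (Phi (upd (fun i => if (i < k)%N then target i else p i)
                  (Ordinal hk) (target (Ordinal hk))))) ->
  Pr (Phi target).
Proof.
move=> h0 hs.
suff : forall k, (k <= n)%N -> Pr (Phi (fun i => if (i < k)%N then target i else p i)).
  move=> /(_ n (leqnn n)).
  by rewrite (_ : (fun i => _) = target) //; apply/funext => i; rewrite ltn_ord.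
elim => [_|k IH hk].
  by rewrite (_ : (fun i => _) = p) //; apply/funext => i.
have := hs k hk (IH (ltnW hk)).
rewrite (_ : upd _ _ _ = (fun i => if (i < k.+1)%N then target i else p i)) //.
apply/funext => j; rewrite /upd ltnS.
case: (eqVneq j (Ordinal hk)) => [->|ne] /=; first by rewrite leqnn.
have jk : (val j == k) = false.
  by apply/negbTE; apply: contra ne => /eqP jk; apply/eqP/val_inj.
by rewrite [(nat_of_ord j <= k)%N]leq_eqVlt jk.
Qed.

Lemma final b (hb : Lam b) (ab : a < b) (T : pred 'I_n) :
  Phi (fun i => if T i then dPL ha else dPL hb) = \sum_(i < n | T i) w i.
Proof.
pose aa i := if T i then a else b.
have h1 : forall i, Lam (aa i) by move=> i; rewrite /aa; case: ifP.
have h2 : forall i A, measurable A ->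
    sval (if T i then dPL ha else dPL hb) A = \d_(aa i) A.
  by move=> i A _; rewrite /aa; case: ifP.
have mS : measurable [set x | Lam x /\ x <= a].
  rewrite (_ : [set x | _] = Lam `&` `]-oo, a]%classic).
    exact: measurableI.
  by apply/seteqP; split => x /=; rewrite in_itv.
rewrite /Phi /cdfL (hWP h1 h2 mS).
rewrite (eq_bigr (fun i => (if T i then w i else 0)%:E)); last first.
  move=> i _; rewrite diracE /aa; case: ifP => Ti.
    by rewrite mem_set ?mule1 //.
  rewrite memNset ?mule0 //= => -[_ ba].
  by move: ab; rewrite ltNge ba.
by rewrite sumEFin /= -big_mkcond.
Qed.

Lemma partA_up (p : 'I_n -> PL Lam) :
  (exists2 b, Lam b & a < b) -> Phi p <= mu_w w (fun i => cdfL (p i) a).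
Proof.
move=> [b hb ab].
set x := Phi p; set r := fun i => cdfL (p i) a.
pose target i := if r i < x then dPL hb else dPL ha.
have ht : Phi target = \sum_(i < n | x <= r i) w i.
  rewrite (_ : target = fun i => if x <= r i then dPL ha else dPL hb).
    exact: final.
  by apply/funext => i; rewrite /target ltNge; case: (x <= r i).
have : x <= Phi target.
  apply: (@induct p target (fun y => x <= y)) => // k hk.
  set q := fun i => _; move=> hq.
  rewrite {1}/target; case: ifPn => rx.
    rewrite same_lt //.
    - by rewrite /q /= ltnn; exact: lt_le_trans rx hq.
    - rewrite cdfL_dPL; case: ifPn => [ba|_].
        by move: ab; rewrite ltNge ba.
      by apply: lt_le_trans hq; apply: le_lt_trans rx; exact: cdfL_ge0.
  apply: le_trans hq _; apply: to_high.
  by rewrite cdfL_dPL lexx.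
rewrite ht => hx; apply: (mu_ub hw0); split => //.
by rewrite cdfL_ge0 cdfL_le1.
Qed.

Lemma partA_lo (p : 'I_n -> PL Lam) :
  (exists2 b, Lam b & a < b) -> mu_w w (fun i => cdfL (p i) a) <= Phi p.
Proof.
move=> [b hb ab].
set x := Phi p; set r := fun i => cdfL (p i) a.
pose target i := if x < r i then dPL ha else dPL hb.
have ht : Phi target = \sum_(i < n | x < r i) w i by exact: final.
have : Phi target <= x.
  apply: (@induct p target (fun y => y <= x)) => // k hk.
  set q := fun i => _; move=> hq.
  rewrite {1}/target; case: ifPn => rx.
    rewrite same_gt //.
    - by rewrite /q /= ltnn; exact: le_lt_trans hq rx.
    - rewrite cdfL_dPL lexx.
      by apply: le_lt_trans hq _; apply: lt_le_trans rx _; exact: cdfL_le1.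
  apply: le_trans _ hq; apply: to_low.
  rewrite cdfL_dPL; case: ifPn => // ba.
  by move: ab; rewrite ltNge ba.
rewrite ht => hx; apply: (mu_le hw0) => y [/andP[y0 y1] yS].
rewrite leNgt; apply/negP => xy.
have : y <= x.
  apply: (le_trans yS); apply: (le_trans _ hx); apply: (Ssub hw0) => i /= yi.
  exact: lt_le_trans xy yi.
by rewrite leNgt xy.
Qed.

Lemma partA (p : 'I_n -> PL Lam) : Phi p = mu_w w (fun i => cdfL (p i) a).
Proof.
have [hb|nb] := pselect (exists2 b, Lam b & a < b).
  by apply/le_anti; rewrite partA_up ?partA_lo.
have all1 (q : PL Lam) : cdfL q a = 1.
  rewrite /cdfL (_ : [set x | _] = Lam); first by rewrite (svalP q).
  apply/seteqP; split => [x []//|x lx]; split => //.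
  by rewrite leNgt; apply/negP => ax; apply: nb; exists x.
by rewrite /Phi all1 (mu_one hw0 hw1) // => i; rewrite all1.
Qed.

End PartA.

Section PartB.
Variable R : realType.
Variable Lam : set R.
Hypothesis hLam : measurable Lam.

Lemma argmax_nat (f : nat -> R) k : exists j, (j <= k)%N /\ forall i, (i <= k)%N -> f i <= f j.
Proof.
elim: k => [|k [j [jk hj]]].
  by exists 0%N; split => // i; rewrite leqn0 => /eqP ->.
have [fj|fk] := leP (f j) (f k.+1).
  exists k.+1; split => // i; rewrite leq_eqVlt => /orP[/eqP ->//|ik].
  exact: le_trans (hj i ik) fj.
exists j; split; first exact: leqW.
move=> i; rewrite leq_eqVlt => /orP[/eqP ->|ik]; first exact: ltW.
exact: hj.
Qed.

Lemma mD (b : R) : measurable [set y | Lam y /\ y <= b].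
Proof.
rewrite (_ : [set y | _] = Lam `&` `]-oo, b]%classic); first exact: measurableI.
by apply/seteqP; split => y /=; rewrite in_itv.
Qed.

Local Open Scope ereal_scope.

Lemma cdfLE' (q : PL Lam) (b : R) : sval q [set y | Lam y /\ (y <= b)%R] = (cdfL q b)%:E.
Proof. by rewrite /cdfL fineK// fin_num_measure//; exact: mD. Qed.

Lemma PL_eq_oo (q1 q2 : PL Lam) : (forall a, Lam a -> cdfL q1 a = cdfL q2 a) ->
  forall x, sval q1 `]-oo, x]%classic = sval q2 `]-oo, x]%classic.
Proof.
move=> h x.
rewrite !(@PL_conc _ _ hLam _ `]-oo, x]%classic)//.
have LE : `]-oo, x]%classic `&` Lam = [set y | Lam y /\ (y <= x)%R].
  by apply/seteqP; split => y /=; rewrite in_itv /= => -[].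
rewrite LE; set L := [set y | _].
have [[y0 Ly0]|nL] := pselect (L !=set0); last first.
  have -> : L = set0 by apply/seteqP; split => // y Ly; apply: nL; exists y.
  by rewrite !measure0.
have hs : has_sup L by split; [exists y0 | exists x => y []].
set s := sup L.
have sx : (s <= x)%R by apply: ge_sup; [exists y0 | move=> y []].
have ub y : L y -> (y <= s)%R by move=> Ly; exact: sup_upper_bound.
have [Ls|nLs] := pselect (Lam s).
  have -> : L = [set y | Lam y /\ (y <= s)%R].
    apply/seteqP; split => y; first by move=> [Ly yx]; split => //; apply: ub.
    by move=> [Ly ys]; split => //; exact: le_trans ys sx.
  by rewrite !cdfLE' h.
have adh k : exists a, L a /\ (s - (k.+1%:R)^-1 < a)%R.
  have e0 : (0 < (k.+1%:R)^-1 :> R)%R by rewrite invr_gt0 ltr0Sn.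
  have [a La lt] := sup_adherent e0 hs.
  by exists a.
have /choice [a ha] := adh.
pose D k := [set y | Lam y /\ (y <= a k)%R].
pose U k := \bigcup_(i in [set i | (i <= k)%N]) D i.
have mU k : measurable (U k) by apply: bigcup_measurable => i _; exact: mD.
have UE k : exists j, U k = D j.
  have [j [jk hj]] := argmax_nat a k.
  exists j; apply/seteqP; split.
    by move=> y [i /= ik [Ly yi]]; split => //; exact: le_trans yi (hj i ik).
  by move=> y Dy; exists j.
have LU : L = \bigcup_k U k.
  apply/seteqP; split.
    move=> y [Ly yx]; have ys := ub y (conj Ly yx).
    have ysl : (y < s)%R.
      by rewrite lt_neqAle ys andbT; apply/eqP => ey; apply: nLs; rewrite -ey.
    pose k := Num.Def.trunc ((s - y)^-1).
    exists k => //; exists k => //=; split => //.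
    apply: ltW; apply: lt_trans (ha k).2.
    rewrite ltrBrDl addrC -ltrBrDl invf_plt ?posrE ?subr_gt0 //.
    exact: truncnS_gt.
  move=> y [k _ [i /= _ [Ly yi]]]; split => //.
  exact: le_trans yi (ha i).1.2.
have ndU : {homo U : k m / (k <= m)%N >-> (k <= m)%O}.
  move=> k m km; apply/subsetPset => y [i /= ik Dy]; exists i => //=.
  exact: leq_trans ik km.
have c1 := nondecreasing_cvg_mu (mu := sval q1) mU (bigcup_measurable (fun k _ => mU k)) ndU.
have c2 := nondecreasing_cvg_mu (mu := sval q2) mU (bigcup_measurable (fun k _ => mU k)) ndU.
have e12 : (sval q1) \o U = (sval q2) \o U.
  apply/funext => k /=; have [j ->] := UE k.
  by rewrite /D !cdfLE' h //; exact: (ha j).1.1.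
rewrite e12 in c1; rewrite LU; exact: cvg_unique c1 c2.
Qed.

Lemma PL_eq (q1 q2 : PL Lam) : (forall a, Lam a -> cdfL q1 a = cdfL q2 a) ->
  forall A, measurable A -> sval q1 A = sval q2 A.
Proof.
move=> h; apply: cdf_unique; first exact: PL_eq_oo.
by move=> x; rewrite (le_lt_trans (probability_le1 _ _)) ?ltry.
Qed.

End PartB.

Record wt (R : realType) (n : nat) := Wt {
  wtf :> 'I_n -> R;
  wt0 : forall i, 0 <= wtf i;
  wt1 : \sum_(i < n) wtf i = 1 }.

Section Fnu.
Variable R : realType.
Variable n : nat.
Variable Lam : set R.

Definition Gs (p : 'I_n -> PL Lam) (t : R) : R := \sum_(i < n) Fc (p i) t.

Lemma Gs_cvg (p : 'I_n -> PL Lam) (F : set_system R) {FF : Filter F} (l : 'I_n -> R) :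
  (forall i, Fc (p i) t @[t --> F] --> l i) ->
  Gs p t @[t --> F] --> \sum_(i < n) l i.
Proof.
move=> h; apply: (@cvg_big _ _ +%R 0 xpredT add_continuous) => // i _; exact: h.
Qed.

Lemma Gs_rc (p : 'I_n -> PL Lam) : right_continuous (Gs p).
Proof. by move=> x; apply: Gs_cvg => i; exact: Fc_rc. Qed.

Lemma Gs_nd (p : 'I_n -> PL Lam) : nondecreasing (Gs p).
Proof. by move=> x y xy; apply: ler_sum => i _; exact: Fc_nd. Qed.

Definition Fnu (W : wt R n) (p : 'I_n -> PL Lam) (x : R) : R :=
  mu_w W (fun i => Fc (p i) x).

Lemma Fnu_nd W p : nondecreasing (Fnu W p).
Proof. move=> x y xy; apply: (mu_mono (wt0 W)) => i; exact: Fc_nd. Qed.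

Lemma Fnu_lip W p x t : x <= t -> Fnu W p t <= Fnu W p x + (Gs p t - Gs p x).
Proof.
move=> xt; apply: (mu_lip (wt0 W)).
  by rewrite subr_ge0; exact: Gs_nd.
move=> i; rewrite -lerBlDl /Gs -sumrB (bigD1 i) //= lerDl.
by apply: sumr_ge0 => j _; rewrite subr_ge0; exact: Fc_nd.
Qed.

Lemma Fnu_rc W p : right_continuous (Fnu W p).
Proof.
move=> x.
apply: (@squeeze_cvgr _ _ _ _ (fun _ => Fnu W p x) (fun t => Fnu W p x + (Gs p t - Gs p x))).
- near=> t.
  have xt : x <= t by apply/ltW; near: t; exact: nbhs_right_gt.
  by rewrite Fnu_nd //= Fnu_lip.
- exact: cvg_cst.
- rewrite -[X in _ --> X]addr0; apply: cvgD; first exact: cvg_cst.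
  rewrite -[X in _ --> X](subrr (Gs p x)); apply: cvgB; [exact: Gs_rc | exact: cvg_cst].
Unshelve. all: end_near.
Qed.

Lemma Fnu_Ny0 W p : Fnu W p @ -oo --> (0:R).
Proof.
apply: (@squeeze_cvgr _ _ _ _ (fun _ => 0) (Gs p)).
- near=> t; rewrite (mu_ge0 (wt0 W)) /=.
  by apply: (mu_le_sum (wt0 W)) => i; exact: Fc_ge0.
- exact: cvg_cst.
  have h := Gs_cvg (p:=p) (l:=fun _ => 0) (fun i => Fc_Ny0 (p i)).
  rewrite big1 in h => //; apply: h; exact: _.
Unshelve. all: end_near.
Qed.

Lemma Fnu_y1 W p : Fnu W p @ +oo --> (1:R).
Proof.
apply: (@squeeze_cvgr _ _ _ _ (fun t => 1 - \sum_(i < n) (1 - Fc (p i) t)) (fun _ => 1)).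
- near=> t; rewrite (mu_le1 (wt0 W)) andbT.
  by apply: (mu_ge_sum (wt0 W) (wt1 W)) => i; exact: Fc_le1.
- rewrite -[X in _ --> X]subr0; apply: cvgB; first exact: cvg_cst.
  have h : forall i, (1 - Fc (p i) t) @[t --> +oo] --> (0:R).
    move=> i; rewrite -[X in _ --> X](subrr 1); apply: cvgB; [exact: cvg_cst | exact: Fc_y1].
  have h2 := @cvg_big _ _ +%R 0 xpredT add_continuous _ _ (index_enum 'I_n) _ _ _ (fun i _ => h i).
  rewrite big1 in h2 => //; apply: h2; exact: _.
- exact: cvg_cst.
Unshelve. all: end_near.
Qed.

End Fnu.

HB.instance Definition _ (R : realType) (n : nat) (Lam : set R) (W : wt R n)
  (p : 'I_n -> PL Lam) :=
  isCumulative.Build R _ R (Fnu W p) (@Fnu_nd R n Lam W p) (@Fnu_rc R n Lam W p).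
HB.instance Definition _ (R : realType) (n : nat) (Lam : set R) (W : wt R n)
  (p : 'I_n -> PL Lam) :=
  isCumulativeBounded.Build R 0 1 (Fnu W p) (@Fnu_Ny0 R n Lam W p) (@Fnu_y1 R n Lam W p).

Section LSR.
Variable R : realType.
Definition LSM (f : cumulative R R) : set R -> \bar R := lebesgue_stieltjes_measure f.
Lemma LSM0 f : LSM f set0 = 0%E. Proof. exact: measure0. Qed.
Lemma LSM_ge0 f A : (0 <= LSM f A)%E. Proof. exact: measure_ge0. Qed.
Lemma LSM_sa f : semi_sigma_additive (LSM f).
Proof. exact: (@measure_semi_sigma_additive _ (measurableTypeR R) _ (lebesgue_stieltjes_measure f)). Qed.
End LSR.
HB.instance Definition _ (R : realType) (f : cumulative R R) :=
  isMeasure.Build _ R R (LSM f) (LSM0 f) (@LSM_ge0 R f) (@LSM_sa R f).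

Section LSP.
Variable R : realType.
Definition LSP (f : cumulativeBounded (0:R) 1) : set R -> \bar R := lebesgue_stieltjes_measure f.
Lemma LSP0 f : LSP f set0 = 0%E. Proof. exact: measure0. Qed.
Lemma LSP_ge0 f A : (0 <= LSP f A)%E. Proof. exact: measure_ge0. Qed.
Lemma LSP_sa f : semi_sigma_additive (LSP f).
Proof. exact: (@measure_semi_sigma_additive _ (measurableTypeR R) _ (lebesgue_stieltjes_measure f)). Qed.
End LSP.
HB.instance Definition _ (R : realType) (f : cumulativeBounded (0:R) 1) :=
  isMeasure.Build _ R R (LSP f) (LSP0 f) (@LSP_ge0 R f) (@LSP_sa R f).
Lemma LSP_T (R : realType) (f : cumulativeBounded (0:R) 1) : LSP f setT = 1%E.
Proof. exact: (probability_setT (lebesgue_stieltjes_measure f)). Qed.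
HB.instance Definition _ (R : realType) (f : cumulativeBounded (0:R) 1) :=
  Measure_isProbability.Build _ R R (LSP f) (LSP_T f).

Section LSoo.
Variable R : realType.

Lemma LS_oc (f : cumulative R R) (a b : R) : (a <= b)%R ->
  lebesgue_stieltjes_measure f `]a, b]%classic = (f b - f a)%:E.
Proof.
move=> ab; rewrite /lebesgue_stieltjes_measure /measure_extension/=.
by rewrite measurable_mu_extE/= ?wlength_itv_bnd//; exact: is_ocitv.
Qed.

Lemma LS_oo (f : cumulative R R) (l : R) : f @ -oo --> l ->
  forall x, lebesgue_stieltjes_measure f `]-oo, x]%classic = (f x - l)%:E.
Proof.
move=> fl r; rewrite itvNybndEbigcup.
have : lebesgue_stieltjes_measure f `](- n%:R)%R, r] @[n --> \oo] --> (f r - l)%:E.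
  suff : (f r - f (- n%:R))%:E @[n --> \oo] --> (f r - l)%:E.
    apply: cvg_trans; apply: near_eq_cvg; near=> n.
    rewrite LS_oc// lerNl; near: n; exact: nbhs_infty_ger.
  apply: cvg_EFin; first by near=> n.
  apply: cvgB; first exact: cvg_cst.
  apply: (cvg_comp _ _ _ fl).
  by apply: (cvg_comp _ _ cvgr_idn); rewrite ninfty.
have : lebesgue_stieltjes_measure f `](- n%:R)%R, r] @[n --> \oo] -->
    lebesgue_stieltjes_measure f (\bigcup_n `](- n%:R)%R, r]%classic).
  apply: nondecreasing_cvg_mu => //; first exact: bigcup_measurable.
  by move=> *; apply/subsetPset/subset_itv; rewrite leBSide//= lerN2 ler_nat.
exact: cvg_unique.
Unshelve. all: by end_near. Qed.
End LSoo.

Section Gd.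
Variable R : realType.
Variable n : nat.
Variable Lam : set R.

Definition Gd (W : wt R n) (p : 'I_n -> PL Lam) (t : R) : R := Gs p t - Fnu W p t.

Lemma Gd_nd W p : nondecreasing (Gd W p).
Proof.
move=> x y xy; rewrite /Gd; have := Fnu_lip W p xy.
have := Gs_nd p xy; lra.
Qed.

Lemma Gd_rc W p : right_continuous (Gd W p).
Proof. move=> x; apply: cvgB; [exact: Gs_rc | exact: Fnu_rc]. Qed.

Lemma Gd_Ny0 W p : Gd W p @ -oo --> (0:R).
Proof.
rewrite -[X in _ --> X](subrr 0); apply: cvgB; last exact: Fnu_Ny0.
have h := Gs_cvg (p:=p) (l:=fun _ => 0) (fun i => Fc_Ny0 (p i)).
rewrite big1 in h => //; apply: h; exact: _.
Qed.
End Gd.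

HB.instance Definition _ (R : realType) (n : nat) (Lam : set R) (W : wt R n)
  (p : 'I_n -> PL Lam) :=
  isCumulative.Build R _ R (Gd W p) (@Gd_nd R n Lam W p) (@Gd_rc R n Lam W p).

Section Dom.
Variable R : realType.
Variable n : nat.
Variable Lam : set R.
Local Open Scope ereal_scope.

Lemma LSP_Fnu_oo (W : wt R n) (p : 'I_n -> PL Lam) x :
  LSP (Fnu W p) `]-oo, x]%classic = (Fnu W p x)%:E.
Proof. by rewrite /LSP (LS_oo (Fnu_Ny0 W p)) subr0. Qed.

Lemma nu_dom (W : wt R n) (p : 'I_n -> PL Lam) C : measurable C ->
  LSP (Fnu W p) C <= \sum_(i < n) sval (p i) C.
Proof.
move=> mC.
pose m1 : {measure set R -> \bar R} := measure_add (LSP (Fnu W p)) (LSM (Gd W p)).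
pose mk (k : nat) : {measure set R -> \bar R} :=
  match (insub k : option 'I_n) with Some i => sval (p i) | None => mzero end.
pose m2 : {measure set R -> \bar R} := msum mk n.
have m2E A : m2 A = \sum_(i < n) sval (p i) A.
  by apply: eq_bigr => i _; rewrite /mk valK.
have m1E A : m1 A = LSP (Fnu W p) A + LSM (Gd W p) A by exact: measure_addE.
have e : forall A, measurable A -> m1 A = m2 A.
  apply: (@cdf_unique R m1 m2) => [x|x].
    rewrite m1E m2E LSP_Fnu_oo /LSM (LS_oo (Gd_Ny0 W p)) subr0.
    rewrite (eq_bigr (fun i => (Fc (p i) x)%:E)); last by move=> i _; rewrite FcE.
    by rewrite sumEFin /Gd -EFinD addrC subrK.
  rewrite m1E LSP_Fnu_oo /LSM (LS_oo (Gd_Ny0 W p)) -EFinD; exact: ltry.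
rewrite -m2E -e // m1E leeDl //; exact: measure_ge0.
Qed.

End Dom.

Section Exist.
Variable R : realType.
Variable n : nat.
Variable Lam : set R.
Hypothesis hLam : measurable Lam.
Variable W : wt R n.
Local Open Scope ereal_scope.

Lemma nu_Lam (p : 'I_n -> PL Lam) : (LSP (Fnu W p) : probability R R) Lam = 1.
Proof.
have h0 : (LSP (Fnu W p) : probability R R) (~` Lam) = 0.
  apply/eqP; rewrite eq_le measure_ge0 andbT.
  apply: le_trans (nu_dom W p (measurableC hLam)) _.
  rewrite big1 // => i _.
  by rewrite probability_setC // (svalP (p i)) subee.
have := @probability_setC _ _ _ (LSP (Fnu W p)) (~` Lam) (measurableC hLam).
by rewrite setCK h0 sube0.
Qed.

Definition psi0 : PAF Lam n :=
  fun p => exist _ (LSP (Fnu W p) : probability R R) (nu_Lam p).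

Lemma cdfL_psi0 p a : cdfL (psi0 p) a = mu_w W (fun i => cdfL (p i) a).
Proof.
rewrite (cdfLE hLam) /Fc /= LSP_Fnu_oo /= /Fnu.
by congr mu_w; apply/funext => i; rewrite (cdfLE hLam).
Qed.

Lemma psi0_SP : LevelSP psi0.
Proof.
move=> i p q a ha.
have E : (fun j => cdfL (upd p i q j) a) = upd (fun j => cdfL (p j) a) i (cdfL q a).
  by apply/funext => j; rewrite /upd; case: eqP.
rewrite !cdfL_psi0 E; split => h.
  exact: (mu_sp_lt (wt0 W)).
exact: (mu_sp_gt (wt0 W)).
Qed.

Lemma psi0_WP : WeightedProp W psi0.
Proof.
move=> aa p hl hd A mA.
pose mk (k : nat) : {measure set R -> \bar R} :=
  match (insub k : option 'I_n) with
  | Some i => mscale (NngNum (wt0 W i)) (\d_(aa i) : {measure set R -> \bar R})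
  | None => mzero end.
pose m2 : {measure set R -> \bar R} := msum mk n.
have m2E B : m2 B = \sum_(i < n) (W i)%:E * \d_(aa i) B.
  by apply: eq_bigr => i _; rewrite /mk valK.
rewrite -m2E; apply: (@cdf_unique R (LSP (Fnu W p) : probability R R) m2) => //.
  move=> x; transitivity (Fnu W p x)%:E; first exact: LSP_Fnu_oo.
  rewrite m2E /Fnu.
  have -> : (fun i => Fc (p i) x) = (fun i => if (aa i <= x)%R then 1%R else 0%R).
    apply/funext => i; rewrite /Fc hd // diracE.
    case: ifPn => ax; first by rewrite mem_set //= in_itv /=.
    by rewrite memNset //= in_itv /=; apply/negP.
  rewrite (mu_binary (wt0 W) (wt1 W) (fun i => aa i <= x)%R).
  rewrite (eq_bigr (fun i => (if (aa i <= x)%R then W i else 0%R)%:E)); last first.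
    move=> i _; rewrite diracE; case: ifPn => ax.
      by rewrite mem_set ?mule1 //= in_itv /=.
    by rewrite memNset ?mule0 //= in_itv /=; apply/negP.
  by rewrite sumEFin -big_mkcond.
by move=> x; rewrite (le_lt_trans (probability_le1 _ _)) ?ltry.
Qed.

End Exist.

Unset Implicit Arguments.
Local Open Scope classical_set_scope.
Local Open Scope ring_scope.

Theorem mainTheorem12 (R : realType) (n : nat) (Lam : set R)
    (hLam : measurable Lam) (hne : Lam !=set0)
    (w : 'I_n -> R) (hw0 : forall i, 0 <= w i) (hw1 : \sum_(i < n) w i = 1) :
  (exists psi : PAF Lam n, LevelSP psi /\ WeightedProp w psi) /\
  (forall psi1 psi2 : PAF Lam n,
      LevelSP psi1 -> WeightedProp w psi1 ->
      LevelSP psi2 -> WeightedProp w psi2 ->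
      forall (p : 'I_n -> PL Lam) (A : set R), measurable A ->
        sval (psi1 p) A = sval (psi2 p) A) /\
  (forall psi : PAF Lam n, LevelSP psi -> WeightedProp w psi ->
      (forall (p : 'I_n -> PL Lam) (a : R), Lam a ->
         cdfL (psi p) a = mu_w w (fun i => cdfL (p i) a)) /\
      CertaintyPreserving psi).
Proof.
pose W := Wt hw0 hw1.
split.
  exists (psi0 hLam W); split; [exact: psi0_SP | exact: psi0_WP].
split.
  move=> psi1 psi2 s1 w1 s2 w2 p A mA; apply: (PL_eq hLam) => // a ha.
  by rewrite (partA hLam hw0 hw1 s1 w1 ha) (partA hLam hw0 hw1 s2 w2 ha).
move=> psi sp wp; split.
  by move=> p a ha; rewrite (partA hLam hw0 hw1 sp wp ha).
move=> p A mA AL hA.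
have e : sval (psi p) (~` A) = sval (psi0 hLam W p) (~` A).
  apply: (PL_eq hLam); last exact: measurableC.
  by move=> a ha; rewrite (partA hLam hw0 hw1 sp wp ha) cdfL_psi0.
have h0 : sval (psi p) (~` A) = 0%E.
  rewrite e; apply/eqP; rewrite eq_le measure_ge0 andbT.
  apply: le_trans (nu_dom W p (measurableC mA)) _.
  rewrite big1 // => i _.
  by rewrite probability_setC // hA subee.
have := @probability_setC _ _ _ (sval (psi p)) (~` A) (measurableC mA).
by rewrite setCK h0 sube0.
Qed.
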